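(* Let $m\ge 1$, $P,Q\ge 0$ be integers with $N=P+Q\ge1$, let $D$, $F_1,\ldots,F_m$, $\mathcal{E}$, $d$ and $G_F:\mathcal{E}\to\mathcal{E}$ be as described in the context, and assume that the state network of $G_F$ is strongly connected. Then the set of periodic points of $G_F$ is dense in the metric space $(\mathcal{E},d)$; that is, for every $E\in\mathcal{E}$ and every $\varepsilon>0$ there exist $E'\in\mathcal{E}$ and $k\ge1$ with $G_F^k(E')=E'$ and $d(E,E')<\varepsilon$.
   Context: Let $D=\{k\,2^{-Q}: k=0,1,\ldots,2^N-1\}$ be the set of $N$-bit fixed-point numbers; each $x\in D$ is written in binary as $x=x_{P-1}x_{P-2}\ldots x_0.x_{-1}\ldots x_{-Q}$ with digits $x_j\in\{0,1\}$. For $x,y\in D$ let $x\cdot y$, $x+y$ and $\overline{x}$ denote bitwise AND, bitwise OR and bitwise NOT (complement of every one of the $N$ digits), which are again elements of $D$. Let $F_1,\ldots,F_m:D^m\to D$ be arbitrary functions. Let $\Sigma$ be the set of one-sided infinite sequences $w=w^1w^2\ldots$ with $w^k\in D$, and $\sigma:\Sigma\to\Sigma$ the left shift $\sigma(w)=w^2w^3\ldots$. Let $\mathcal{E}=\Sigma^m\times D^m$, with elements $E=((w_1,\ldots,w_m),(x_1,\ldots,x_m))$. Define $G_F:\mathcal{E}\to\mathcal{E}$ by $G_F((w_1,\ldots,w_m),x)=((\sigma(w_1),\ldots,\sigma(w_m)),(H_1,\ldots,H_m))$, where $x=(x_1,\ldots,x_m)$ and $H_i=(x_i\cdot\overline{w_i^1})+(F_i(x)\cdot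 w_i^1)$ (i.e. bit $j$ of $x_i$ is replaced by bit $j$ of $F_i(x)$ exactly when bit $j$ of $w_i^1$ is $1$). The metric on $\mathcal{E}$ is $d(E,\hat E)=\sum_{i=1}^m\sum_{k=1}^\infty \frac{|w_i^k-\hat w_i^k|}{2^{Nk}}+\sqrt{\sum_{i=1}^m (x_i-\hat x_i)^2}$. The state network of $G_F$ is the directed graph whose vertex set is $D^m$, with an edge from $\hat x$ to $\tilde x$ whenever there is some $(w_1,\ldots,w_m)\in\Sigma^m$ such that the $D^m$-component of $G_F((w_1,\ldots,w_m),\hat x)$ equals $\tilde x$. It is strongly connected if every vertex is reachable from every other vertex by a directed path. *)

(* Defs.v *)
From mathcomp Require Import all_boot all_order all_algebra.
From mathcomp Require Import all_classical all_reals all_analysis.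
From Stdlib Require Import Relations.
Set Implicit Arguments. Unset Strict Implicit. Unset Printing Implicit Defensive.
Import Order.TTheory GRing.Theory Num.Theory.
Local Open Scope ring_scope.

(* An N-bit fixed point number x = x_{P-1}...x_0.x_{-1}...x_{-Q} (N = P+Q)
   is given by its N binary digits; digit index j : 'I_N stands for the
   digit of weight 2^(j-Q). *)
Definition D (N : nat) := 'I_N -> bool.

Definition Dval (R : realType) (N Q : nat) (x : D N) : R :=
  (\sum_(j < N) (x j)%:R * 2 ^+ j) / 2 ^+ Q.

Definition band N (x y : D N) : D N := fun j => x j && y j.
Definition bor  N (x y : D N) : D N := fun j => x j || y j.
Definition bnot N (x : D N) : D N := fun j => ~~ x j.

(* sequences w = w^1 w^2 ... ; w n stands for w^(n+1) *)
Definition Sigma N := nat -> D N.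
Definition shift N (w : Sigma N) : Sigma N := fun n => w n.+1.

Definition Espace m N := (('I_m -> Sigma N) * ('I_m -> D N))%type.

Definition GF m N (F : 'I_m -> ('I_m -> D N) -> D N) (E : Espace m N)
  : Espace m N :=
  (fun i => shift (E.1 i),
   fun i => bor (band (E.2 i) (bnot (E.1 i 0%N))) (band (F i E.2) (E.1 i 0%N))).

Definition rseries (R : realType) (u : nat -> R) : R :=
  limn (fun n => \sum_(k < n) u k).

Definition dist (R : realType) (m P Q : nat) (E Eh : Espace m (P + Q)) : R :=
  \sum_(i < m) rseries (fun k =>
      `|Dval R Q (E.1 i k) - Dval R Q (Eh.1 i k)| / 2 ^+ ((P + Q) * k.+1))
  + Num.sqrt (\sum_(i < m) (Dval R Q (E.2 i) - Dval R Q (Eh.2 i)) ^+ 2).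

Definition state_edge m N (F : 'I_m -> ('I_m -> D N) -> D N)
  (xh xt : 'I_m -> D N) : Prop :=
  exists W : 'I_m -> Sigma N, (GF F (W, xh)).2 = xt.

Definition strongly_connected m N (F : 'I_m -> ('I_m -> D N) -> D N) : Prop :=
  forall x y : 'I_m -> D N, clos_refl_trans _ (state_edge F) x y.
Arguments dist R m P Q E Eh : clear implicits.

(* Main.v *)
Require Import Defs.
From mathcomp Require Import all_boot all_order all_algebra.
From mathcomp Require Import all_classical all_reals all_analysis.
From mathcomp Require Import ring lra.
From Stdlib Require Import Relations.
Import Order.TTheory GRing.Theory Num.Theory.
Local Open Scope ring_scope.
Section Comb.
Variables (m N : nat) (F : 'I_m -> ('I_m -> D N) -> D N).

Definition step (x : 'I_m -> D N) (c : 'I_m -> D N) : 'I_m -> D N :=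
  fun i => bor (band (x i) (bnot (c i))) (band (F i x) (c i)).

Lemma path_exists x y : clos_refl_trans _ (state_edge F) x y ->
  exists cs : seq ('I_m -> D N), foldl step x cs = y.
Proof.
elim=> [a b [W <-]| a | a b c _ [cs1 H1] _ [cs2 H2]].
- by exists [:: fun i => W i 0%N].
- by exists [::].
- by exists (cs1 ++ cs2); rewrite foldl_cat H1.
Qed.

Lemma iter_GF k : forall (W : 'I_m -> Sigma N) x,
  iter k (GF F) (W, x) =
  ((fun i t => W i (t + k)%N), foldl step x (mkseq (fun t i => W i t) k)).
Proof.
elim: k => [|k IH] W x.
  by rewrite /=; congr pair; apply: funext => i; apply: funext => t; rewrite addn0.
rewrite iterSr IH /=; congr pair.
  by apply: funext => i; apply: funext => t; rewrite /shift addnS.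
congr foldl.
rewrite /mkseq /= -[iota 1 k]/(iota (1+0) k) iotaDl -map_comp.
by apply/eq_map => t /=.
Qed.
End Comb.
Arguments step {m N} F.
Arguments path_exists {m N F x y}.
Arguments iter_GF {m N F}.
Lemma rseries_le (R : realType) (u : nat -> R) (B : R) :
  (forall k, 0 <= u k) -> (forall n, \sum_(k < n) u k <= B) -> rseries u <= B.
Proof.
move=> u0 uB; rewrite /rseries.
have nd : nondecreasing_seq (fun n => \sum_(k < n) u k).
  apply/nondecreasing_seqP => n; rewrite big_ord_recr /= lerDl; exact: u0.
apply: limr_le; first apply: nondecreasing_is_cvgn => //.
  by exists B => _ [n _ <-].
by apply: nearW => n; apply: uB.
Qed.

Lemma Dval_bnd (R : realType) N Q (x : D N) :
  0 <= Dval R Q x <= N%:R * 2 ^+ N.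
Proof.
rewrite /Dval.
have hQ : 1 <= (2:R) ^+ Q by apply: exprn_ege1; lra.
have s0 : 0 <= \sum_(j < N) (x j)%:R * (2:R) ^+ j.
  by apply: sumr_ge0 => j _; apply: mulr_ge0; [exact: ler0n| exact: exprn_ge0].
have s1 : \sum_(j < N) (x j)%:R * (2:R) ^+ j <= N%:R * 2 ^+ N.
  apply: (@le_trans _ _ (\sum_(j < N) (2:R) ^+ N)).
    apply: ler_sum => j _; case: (x j); rewrite ?mul1r ?mul0r; last exact: exprn_ge0.
    by apply: ler_weXn2l; [lra| exact: ltnW (ltn_ord j)].
  by rewrite sumr_const card_ord mulr_natl.
apply/andP; split; first by apply: divr_ge0 => //; apply: exprn_ge0.
rewrite ler_pdivrMr; last by apply: exprn_gt0; lra.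
apply: le_trans s1 _; rewrite ler_peMr //.
Qed.

Lemma Dval_dist (R : realType) N Q (a b : D N) :
  `|Dval R Q a - Dval R Q b| <= N%:R * 2 ^+ N.
Proof.
have /andP[a0 a1] := Dval_bnd R N Q a.
have /andP[b0 b1] := Dval_bnd R N Q b.
rewrite ler_norml; apply/andP; split; lra.
Qed.
Theorem theorem1 (R : realType) (m P Q : nat) (hm : (1 <= m)%N)
  (hN : (1 <= P + Q)%N)
  (F : 'I_m -> ('I_m -> D (P + Q)) -> D (P + Q))
  (hsc : strongly_connected F) :
  forall (E : Espace m (P + Q)) (eps : R), 0 < eps ->
    exists (E' : Espace m (P + Q)) (k : nat),
      (1 <= k)%N /\ iter k (GF F) E' = E' /\ dist R m P Q E E' < eps.
Proof.
move=> [w x] eps eps0.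
pose C : R := (P + Q)%:R * 2 ^+ (P + Q).
have C0 : 0 <= C by apply: mulr_ge0; [exact: ler0n | apply: exprn_ge0; lra].
pose b := Num.bound (m%:R * C / eps).
pose n := b.+1.
pose y := foldl (step F) x (mkseq (fun t i => w i t) n).
have [cs Hcs] := path_exists (hsc y x).
pose S := mkseq (fun t i => w i t) n ++ cs.
pose k := size S.
have kn : (n <= k)%N by rewrite /k size_cat size_mkseq leq_addr.
pose W' : 'I_m -> Sigma (P + Q) := fun i t => nth (fun i => w i 0%N) S (t %% k) i.
exists (W', x), k; split; first by apply: leq_trans kn.
split.
  rewrite iter_GF; congr pair.
    by apply: funext => i; apply: funext => t; rewrite /W' modnDr.
  have -> : mkseq (fun t i => W' i t) k = S.
    rewrite -[in RHS](mkseq_nth (fun i => w i 0%N) S).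
    rewrite /mkseq; apply/eq_in_map => t; rewrite mem_iota add0n => /andP[_ tk].
    by apply: funext => i; rewrite /W' modn_small.
  by rewrite foldl_cat Hcs.
have Wt : forall i t, (t < n)%N -> W' i t = w i t.
  move=> i t tn; rewrite /W' modn_small ?(leq_trans tn kn)//.
  by rewrite nth_cat size_mkseq tn nth_mkseq.
have p2 : forall j, (0:R) < 2 ^+ j by move=> j; apply: exprn_gt0; lra.
have hsum : forall i, rseries (fun t => `|Dval R Q (w i t) - Dval R Q (W' i t)|
      / 2 ^+ ((P + Q) * t.+1)) <= C / 2 ^+ n.
  move=> i.
  pose u t := `|Dval R Q (w i t) - Dval R Q (W' i t)| / (2:R) ^+ ((P + Q) * t.+1).
  change (rseries u <= C / 2 ^+ n); apply: rseries_le.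
    by move=> t; apply: divr_ge0; [exact: normr_ge0 | exact: ltW].
  have ub : forall t, u t <= if (t < n)%N then 0 else C / 2 ^+ t.+1.
    move=> t; rewrite /u; case: ltnP => tn.
      by rewrite Wt // subrr normr0 mul0r.
    apply: (@le_trans _ _ (C / 2 ^+ ((P + Q) * t.+1))).
      by apply: ler_wpM2r; [rewrite invr_ge0; exact: ltW | exact: Dval_dist].
    apply: ler_wpM2l => //; rewrite lef_pV2 ?posrE //.
    by apply: ler_weXn2l; [lra | rewrite leq_pmull].
  have key : forall j, \sum_(t < j) u t + C / 2 ^+ (maxn j n) <= C / 2 ^+ n.
    elim=> [|j IH]; first by rewrite big_ord0 add0r max0n.
    rewrite big_ord_recr /=; have := ub j.
    case: (ltnP j n) => jn Hu.
      rewrite (maxn_idPr jn); rewrite (maxn_idPr (ltnW jn)) in IH; lra.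
    rewrite (maxn_idPl (leqW jn)); rewrite (maxn_idPl jn) in IH.
    have e : C / 2 ^+ j.+1 + C / 2 ^+ j.+1 = C / 2 ^+ j.
      rewrite exprS; field; exact: lt0r_neq0 (p2 j).
    lra.
  move=> j; apply: le_trans (key j); rewrite lerDl divr_ge0 //; exact: ltW.
rewrite /dist /=.
rewrite [X in Num.sqrt X]big1; last by move=> i _; rewrite subrr expr0n.
rewrite sqrtr0 addr0.
apply: (@le_lt_trans _ _ (\sum_(i < m) C / 2 ^+ n)).
  by apply: ler_sum => i _; exact: hsum.
rewrite sumr_const card_ord -[_ *+ m]mulr_natl mulrA ltr_pdivrMr //.
have hb : m%:R * C / eps < b%:R.
  by apply: archi_boundP; apply: divr_ge0; [apply: mulr_ge0 | exact: ltW].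
have hn : (b%:R : R) < 2 ^+ n.
  rewrite -natrX ltr_nat; exact: ltn_trans (ltnSn b) (ltn_expl n (isT : (1 < 2)%N)).
have := lt_trans hb hn; rewrite ltr_pdivrMr //.
by rewrite [eps * _]mulrC.
Qed.
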